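(* Let $m\ge 2$, $k\ge 1$, $N=m^k$, and let $\mathbb{F}_q$ be a finite field with $m\mid q-1$ and $\rho\in\mathbb{F}_q$ a primitive $m$-th root of unity. For $i\in\{1,\ldots,k\}$ let $\mathbf{V}_i$ be the $N\times m^{k-1}$ matrix whose columns are the elements of $\mathcal{V}_i=\left\{\prod_{s=1,s\ne i}^{k}\mathbf{X}_s^{x_s}\mathbf{w} : x_s\in\{0,1,\ldots,m-1\}\right\}$. Then for any $i,j\in\{1,\ldots,k\}$, $$\mathrm{rank}\big([\mathbf{V}_i\ \ \mathbf{X}_j\mathbf{V}_i\ \ \mathbf{X}_j^2\mathbf{V}_i\ \cdots\ \mathbf{X}_j^{m-1}\mathbf{V}_i]\big)=\Big|\bigcup_{l=0}^{m-1}\mathcal{L}(\mathbf{X}_j^l\mathbf{V}_i)\Big|=\begin{cases}m^k,& i=j,\\ m^{k-1},& i\ne j.\end{cases}$$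
   Context: For $s\in\{1,\ldots,k\}$, $\mathbf{X}_s=\mathbf{I}_{m^{s-1}}\otimes\mathrm{blkdiag}\big(\mathbf{I}_{N/m^s},\rho\mathbf{I}_{N/m^s},\ldots,\rho^{m-1}\mathbf{I}_{N/m^s}\big)$, an $N\times N$ diagonal matrix with $\mathbf{X}_s^m=\mathbf{I}_N$; $\otimes$ is the Kronecker product; $\mathbf{w}$ is the all-ones vector of length $N$. Lattice representation: every matrix whose columns are vectors $\prod_{s=1}^k\mathbf{X}_s^{x_s}\mathbf{w}$ with $(x_1,\ldots,x_k)\in\{0,\ldots,m-1\}^k$ is mapped by $\mathcal{L}$ to the set of exponent vectors of its columns (exponents mod $m$); so $\mathcal{L}(\mathbf{X}_j^l\mathbf{V}_i)=\{x+l e_j \bmod m : x\in\mathcal{L}(\mathbf{V}_i)\}$. *)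

(* Defs.v *)
From HB Require Import structures.
From mathcomp Require Import all_boot all_order all_algebra.
Set Implicit Arguments. Unset Strict Implicit. Unset Printing Implicit Defensive.
Import GRing.Theory.
Local Open Scope ring_scope.

Section Defs.
Variables (F : finFieldType) (m k : nat) (rho : F).

(* N = m^k.  Rows are indexed by 'I_(m^k), 0-based.  The paper's index
   s \in {1..k} is represented by s : 'I_k with paper s = s+1. *)

Fixpoint mxpow (n : nat) (A : 'M[F]_n) (e : nat) : 'M[F]_n :=
  if e is e'.+1 then A *m mxpow A e' else 1%:M.

(* X_s = I_{m^{s-1}} (x) blkdiag(I_{N/m^s}, rho I, ..., rho^{m-1} I):
   the diagonal entry at row r is rho^b where b is the index of the block of
   size N/m^s = m^(k-s) containing (r mod N/m^{s-1}) = r mod m^(k-s+1). *)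
Definition Xmat (s : 'I_k) : 'M[F]_(m ^ k) :=
  diag_mx (\row_(r < m ^ k)
     rho ^+ ((r %% m ^ (k - s)) %/ m ^ (k - s.+1))).

Definition wvec : 'cV[F]_(m ^ k) := const_mx 1.

Definition expvec := {ffun 'I_k -> 'I_m}.

Definition latvec (x : expvec) : 'cV[F]_(m ^ k) :=
  (\big[mulmx/1%:M]_(s < k) mxpow (Xmat s) (x s)) *m wvec.

Definition Vset (i : 'I_k) : {set 'cV[F]_(m ^ k)} :=
  [set (\big[mulmx/1%:M]_(s < k | s != i) mxpow (Xmat s) (x s)) *m wvec
   | x : expvec].

Definition Lat n (M : 'M[F]_(m ^ k, n)) : {set expvec} :=
  [set x : expvec | [exists c : 'I_n, col c M == latvec x]].

End Defs.

Arguments Xmat {F} m k rho s.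
Arguments wvec {F} m k.
Arguments latvec {F} m k rho x.
Arguments Vset {F} m k rho i.
Arguments Lat {F} m k rho {n} M.

(* Main.v *)
Require Import Defs.
From HB Require Import structures.
From mathcomp Require Import all_boot all_order all_algebra all_fingroup all_solvable all_field.
From mathcomp Require Import zify.
Set Implicit Arguments. Unset Strict Implicit. Unset Printing Implicit Defensive.
Import GRing.Theory.
Local Open Scope ring_scope.

Section Gen.
Variable (F : finFieldType).

Lemma prod_diag n (I : Type) (r : seq I) (P : pred I) (f : I -> 'rV[F]_n) :
  \big[mulmx/1%:M]_(s <- r | P s) diag_mx (f s)
  = diag_mx (\row_j \prod_(s <- r | P s) f s 0 j).
Proof.
elim: r => [|a r IH].
  rewrite big_nil -diag_const_mx; congr diag_mx; apply/rowP => j.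
  by rewrite !mxE big_nil.
rewrite big_cons; case Pa: (P a).
  rewrite IH mul_diag_mx; apply/matrixP => p q; rewrite !mxE.
  case: eqP => [->|_]; rewrite ?mulr1n ?mulr0n ?mulr0 //.
  by rewrite big_cons Pa.
rewrite IH; congr diag_mx; apply/rowP => j; rewrite !mxE.
by rewrite big_cons Pa.
Qed.

Lemma mxpow_diag n (v : 'rV[F]_n) e :
  mxpow (diag_mx v) e = diag_mx (\row_j v 0 j ^+ e).
Proof.
elim: e => [|e IH] /=.
  by rewrite -diag_const_mx; congr diag_mx; apply/rowP => j; rewrite !mxE.
rewrite IH mul_diag_mx; apply/matrixP => p q; rewrite !mxE.
case: eqP => [->|_]; rewrite ?mulr1n ?mulr0n ?mulr0 //.
by rewrite exprS.
Qed.

Lemma diag_mul_const n (v : 'rV[F]_n) :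
  diag_mx v *m const_mx 1 = \col_j v 0 j.
Proof. by rewrite mul_diag_mx; apply/matrixP => p q; rewrite !mxE mulr1. Qed.

End Gen.

Section Spec.
Variables (F : finFieldType) (m k : nat) (rho : F).
Hypothesis hrho : m.-primitive_root rho.

Let m0 : (0 < m)%N. Proof. exact: prim_order_gt0 hrho. Qed.

Definition dg (s : 'I_k) (r : 'I_(m ^ k)) : nat :=
  (r %% m ^ (k - s)) %/ m ^ (k - s.+1).

Definition chi (P : pred 'I_k) (x : expvec m k) (r : 'I_(m ^ k)) : F :=
  \prod_(s < k | P s) rho ^+ (dg s r * x s).

Lemma prodXE (P : pred 'I_k) (x : expvec m k) :
  (\big[mulmx/1%:M]_(s < k | P s) mxpow (Xmat m k rho s) (x s)) *m wvec m k
  = \col_r chi P x r.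
Proof.
rewrite (eq_bigr (fun s => diag_mx (\row_r rho ^+ (dg s r * x s)))).
  rewrite prod_diag /wvec diag_mul_const; apply/matrixP => r c; rewrite !mxE.
  by apply: eq_bigr => s _; rewrite mxE.
move=> s _; rewrite /Xmat mxpow_diag; congr diag_mx; apply/rowP => r.
by rewrite !mxE exprM.
Qed.

Lemma latvecE x : latvec m k rho x = \col_r chi xpredT x r.
Proof. exact: (prodXE xpredT x). Qed.

Definition sh (j : 'I_k) (l : nat) (x : expvec m k) : expvec m k :=
  [ffun s => if s == j then Ordinal (ltn_pmod (x s + l) m0) else x s].

Lemma shiftE j l x :
  mxpow (Xmat m k rho j) l *m latvec m k rho x = latvec m k rho (sh j l x).
Proof.
rewrite !latvecE /Xmat mxpow_diag mul_diag_mx; apply/matrixP => r c.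
rewrite !mxE /chi (bigD1 j) // [in RHS](bigD1 j) //= ffunE eqxx /=.
rewrite mulrA -exprM -exprD -mulnDr addnC.
rewrite [X in rho ^+ X * _]mulnC [X in _ = rho ^+ X * _]mulnC !exprM prim_expr_mod //.
congr (_ * _); apply: eq_bigr => s /negPf sj.
by rewrite ffunE sj.
Qed.


Lemma dgE s r : dg s r = ((r %/ m ^ (k - s.+1)) %% m)%N.
Proof.
rewrite /dg divn_modl; last first.
  by apply: dvdn_exp2l; rewrite leq_sub2l.
congr (_ %% _)%N.
have -> : (k - s = (k - s.+1).+1)%N by rewrite subnSK.
by rewrite expnS mulnK // expn_gt0 m0.
Qed.

Lemma dg_lt s r : (dg s r < m)%N.
Proof. by rewrite dgE ltn_pmod. Qed.

Lemma digits_inj n r r' : (r < m ^ n)%N -> (r' < m ^ n)%N ->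
  (forall t, t < n -> r %/ m ^ t %% m = r' %/ m ^ t %% m)%N -> r = r'.
Proof.
elim: n r r' => [|n IH] r r' hr hr' H.
  by move: hr hr'; rewrite expn0 !ltnS !leqn0 => /eqP-> /eqP->.
rewrite (divn_eq r m) (divn_eq r' m).
have E0 := H 0%N isT; rewrite expn0 !divn1 in E0.
rewrite E0; congr (_ * _ + _)%N.
apply: IH.
- by rewrite ltn_divLR // -expnSr.
- by rewrite ltn_divLR // -expnSr.
move=> t ht; rewrite -!divnMA -expnS; exact: H t.+1 ht.
Qed.

Definition Dg (r : 'I_(m ^ k)) : expvec m k := [ffun s => Ordinal (dg_lt s r)].

Lemma Dg_inj : injective Dg.
Proof.
move=> r r' E; apply/val_inj/(@digits_inj k); [exact: ltn_ord|exact: ltn_ord|].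
move=> t ht.
have hs : (k - t.+1 < k)%N by rewrite ltn_subrL; apply/andP; split=> //; apply: leq_ltn_trans ht.
have := congr1 (fun f : expvec m k => val (f (Ordinal hs))) E.
rewrite /= !ffunE /= !dgE.
have -> : (k - (k - t.+1).+1 = t)%N.
  rewrite -subSn ?subSS ?subKn //; exact: ltnW.
done.
Qed.

Lemma Dg_bij : bijective Dg.
Proof.
apply: (inj_card_bij Dg_inj).
by rewrite card_ffun !card_ord.
Qed.

Lemma geom0 a : ~~ (m %| a)%N -> \sum_(c < m) rho ^+ (c * a) = 0.
Proof.
move=> na.
have w1 : rho ^+ a != 1.
  rewrite -(expr0 rho) (eq_prim_root_expr hrho) mod0n.
  by rewrite /dvdn in na.
have wm : (rho ^+ a) ^+ m = 1 by rewrite exprAC (prim_expr_order hrho) expr1n.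
have := subrX1 (rho ^+ a) m; rewrite wm subrr => /esym /eqP.
rewrite mulf_eq0 subr_eq0 (negPf w1) /= => /eqP S0; rewrite -[RHS]S0.
by apply: eq_bigr => c _; rewrite mulnC exprM.
Qed.

Lemma orth_sum (a : 'I_k -> nat) :
  \sum_(r : 'I_(m ^ k)) \prod_(s < k) rho ^+ (dg s r * a s)
  = if [forall s, m %| a s]%N then (m ^ k)%:R else 0.
Proof.
transitivity (\sum_(z : expvec m k) \prod_(s < k) rho ^+ (z s * a s)).
  rewrite (reindex Dg); last exact: onW_bij _ Dg_bij.
  by apply: eq_bigr => r _; apply: eq_bigr => s _; rewrite ffunE.
rewrite -(bigA_distr_bigA (fun s (c : 'I_m) => rho ^+ (c * a s))) /=.
case: forallP => H.
  rewrite natrX -[k in _ ^+ k]card_ord -prodr_const; apply: eq_bigr => s _.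
  rewrite (eq_bigr (fun _ => 1)) ?sumr_const ?card_ord //.
  move=> c _; rewrite -(prim_expr_mod hrho).
  by move: (dvdn_mull c (H s)); rewrite /dvdn => /eqP ->.
have [s Hs] : exists s, ~~ (m %| a s)%N.
  by apply/existsP; rewrite -negb_forall; apply/forallP.
by rewrite (bigD1 s) //= geom0 // mul0r.
Qed.


Lemma natm_neq0 : (m %| #|F|.-1)%N -> m%:R != 0 :> F.
Proof.
move=> hq; have [p pp pF] := finPcharP F.
apply/negP => /eqP mF.
have pm : (p %| m)%N by rewrite (dvdn_pcharf pF) mF.
have cF : (1 : F) *+ #|F| = 0.
  by rewrite -FinRing.zmodXgE -cardsT expg_cardG // inE.
have pq : (p %| #|F|)%N by rewrite (dvdn_pcharf pF) cF.
have p1 : (p %| #|F|.-1)%N := dvdn_trans pm hq.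
have : (p %| 1)%N.
  have hF : (0 < #|F|)%N by apply/card_gt0P; exists 0.
  by move: pq; rewrite -(prednK hF) -addn1 (dvdn_addr _ p1).
by rewrite dvdn1 => /eqP p1'; move: pp; rewrite p1'.
Qed.

Definition negv (y : expvec m k) : expvec m k :=
  [ffun s => Ordinal (ltn_pmod (m - y s) m0)].

Lemma dvd_neg u v : (u < m)%N -> (v < m)%N -> (m %| u + (m - v) %% m)%N = (u == v).
Proof.
move=> hu hv; case: (posnP v) => [->|v0].
  rewrite subn0 modnn addn0 /dvdn modn_small //.
rewrite (modn_small (_ : m - v < m)%N); last by rewrite ltn_subrL m0 v0.
case: (leqP v u) => hvu.
  have -> : (u + (m - v) = m + (u - v))%N by lia.
  rewrite dvdn_addr // /dvdn modn_small; last by apply: leq_ltn_trans (leq_subr _ _) hu.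
  by rewrite subn_eq0 eqn_leq hvu andbT.
rewrite /dvdn modn_small; last by lia.
rewrite (ltn_eqF hvu); apply/negbTE/eqP; lia.
Qed.

Lemma orth x y : \sum_r chi xpredT x r * chi xpredT (negv y) r
  = if x == y then (m ^ k)%:R else 0 :> F.
Proof.
under eq_bigr => r _ do rewrite /chi -big_split /=.
under eq_bigr => r _ do under eq_bigr => s _ do rewrite -exprD -mulnDr.
rewrite (orth_sum (fun s => x s + negv y s)%N).
congr (if _ then _ else _); apply/forallP/eqP => [H|->].
  apply/ffunP => s; apply/val_inj/eqP.
  by move: (H s); rewrite ffunE /= dvd_neg.
by move=> s; rewrite ffunE /= dvd_neg // eqxx.
Qed.


Lemma Nneq0 : (m %| #|F|.-1)%N -> (m ^ k)%:R != 0 :> F.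
Proof. by move=> hq; rewrite natrX expf_neq0 // natm_neq0. Qed.

Lemma latvec_inj : (m %| #|F|.-1)%N -> injective (latvec m k rho).
Proof.
move=> hq x y E.
have H r : chi xpredT x r = chi xpredT y r.
  by have := congr1 (fun M : 'cV_(m ^ k) => M r 0) E; rewrite !latvecE !mxE.
have := orth x y; under eq_bigr => r _ do rewrite H.
rewrite orth eqxx; case: eqP => // _ /esym/eqP.
by rewrite eq_sym (negPf (Nneq0 hq)).
Qed.

Lemma W_free (S : {set expvec m k}) : (m %| #|F|.-1)%N ->
  row_free (\matrix_(a < #|S|, r < m ^ k) chi xpredT (enum_val a) r).
Proof.
move=> hq; apply/row_freeP.
exists (\matrix_(r, b) (chi xpredT (negv (enum_val b)) r / (m ^ k)%:R)).
apply/matrixP => a b; rewrite !mxE.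
under eq_bigr => r _ do rewrite !mxE mulrA.
rewrite -mulr_suml orth (inj_eq enum_val_inj).
by case: eqP => _; rewrite ?mul0r // mulfV // Nneq0.
Qed.


Definition zero_at (i : 'I_k) (x : expvec m k) : expvec m k :=
  [ffun s => if s == i then Ordinal m0 else x s].

Lemma VsetE_elem (i : 'I_k) (x : expvec m k) :
  (\big[mulmx/1%:M]_(s < k | s != i) mxpow (Xmat m k rho s) (x s)) *m wvec m k
  = latvec m k rho (zero_at i x).
Proof.
rewrite prodXE latvecE; apply/matrixP => r c; rewrite !mxE /chi.
rewrite [in RHS](bigD1 i) //= ffunE eqxx muln0 expr0 mul1r.
by apply: eq_bigr => s /negPf si; rewrite ffunE si.
Qed.

Lemma zero_at_id (i : 'I_k) (x : expvec m k) : val (x i) = 0%N -> zero_at i x = x.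
Proof.
move=> x0; apply/ffunP => s; rewrite ffunE; case: eqP => // ->.
exact: val_inj.
Qed.

End Spec.

Lemma col_mul (R : pzSemiRingType) a b c (A : 'M[R]_(a, b)) (B : 'M[R]_(b, c)) z :
  col z (A *m B) = A *m col z B.
Proof. by rewrite !colE mulmxA. Qed.

Unset Implicit Arguments.

Theorem lemma4 (F : finFieldType) (m k : nat) (rho : F)
  (hm : (2 <= m)%N) (hk : (1 <= k)%N)
  (hq : (m %| #|F|.-1)%N) (hrho : m.-primitive_root rho)
  (i j : 'I_k) (V : 'M[F]_(m ^ k, m ^ (k - 1)))
  (hVcols : [set col c V | c : 'I_(m ^ (k - 1))] = Vset m k rho i)
  (hVinj : injective (fun c : 'I_(m ^ (k - 1)) => col c V)) :
  let U := \bigcup_(l < m) Lat m k rho (mxpow (Xmat m k rho j) l *m V) in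
  \rank (\mxrow_(l < m) (mxpow (Xmat m k rho j) l *m V)) = #|U|
  /\ #|U| = (if i == j then m ^ k else m ^ (k - 1))%N.
Proof.
move=> U.
have m0 := prim_order_gt0 hrho.
set X := Xmat m k rho j.
have colV c : exists2 y : expvec m k, val (y i) = 0%N & col c V = latvec m k rho y.
  have : col c V \in Vset m k rho i by rewrite -hVcols; apply/imsetP; exists c.
  case/imsetP => x _ ->; exists (zero_at hrho i x); first by rewrite ffunE eqxx.
  exact: VsetE_elem.
have Vcol (y : expvec m k) : val (y i) = 0%N -> exists c, col c V = latvec m k rho y.
  move=> y0; have : latvec m k rho y \in Vset m k rho i.
    by apply/imsetP; exists y => //; rewrite VsetE_elem zero_at_id.
  by rewrite -hVcols => /imsetP [c _ E]; exists c.
have LatP (l : nat) (x : expvec m k) : (x \in Lat m k rho (mxpow X l *m V)) =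
    [exists y : expvec m k, (val (y i) == 0%N) && (sh hrho j l y == x)].
  apply/idP/idP.
    rewrite inE => /existsP [c /eqP Hc]; have [y y0 Ey] := colV c.
    apply/existsP; exists y; rewrite y0 eqxx /=.
    apply/eqP/(latvec_inj hrho hq).
    by rewrite -Hc col_mul Ey shiftE.
  case/existsP => y /andP [/eqP y0 /eqP <-]; have [c Ec] := Vcol y y0.
  by rewrite inE; apply/existsP; exists c; rewrite col_mul Ec shiftE.
have UP (x : expvec m k) : (x \in U) = [exists l : 'I_m, x \in Lat m k rho (mxpow X l *m V)].
  by apply/bigcupP/existsP => [[l _ H]|[l H]]; exists l.
have Ueq : U = if i == j then setT else [set x : expvec m k | val (x i) == 0%N].
  apply/setP => x; rewrite UP; case: eqP => [ij|/eqP ij]; rewrite !inE.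
    apply/existsP; exists (x j); rewrite LatP ij; apply/existsP.
    exists (zero_at hrho j x); rewrite ffunE eqxx eqxx /=.
    apply/eqP/ffunP => s; rewrite !ffunE; case: eqP => [->|] //.
    by apply: val_inj; rewrite /= add0n modn_small.
  apply/existsP/idP.
    case=> l /[!LatP] /existsP [y /andP [y0 /eqP <-]].
    by rewrite ffunE (negPf ij).
  move=> x0; exists (Ordinal m0); rewrite LatP; apply/existsP; exists x.
  rewrite x0 /=; apply/eqP/ffunP => s; rewrite ffunE; case: eqP => [->|] //.
  by apply: val_inj; rewrite /= addn0 modn_small.
have cardZ : #|[set x : expvec m k | val (x i) == 0%N]| = (m ^ (k - 1))%N.
  have : #|Vset m k rho i| = (m ^ (k - 1))%N.
    by rewrite -hVcols card_imset // card_ord.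
  have -> : Vset m k rho i = latvec m k rho @: [set x : expvec m k | val (x i) == 0%N].
    apply/setP => v; apply/imsetP/imsetP => [[x _ ->]|[y]].
      exists (zero_at hrho i x); rewrite ?inE ?ffunE ?eqxx //.
      exact: VsetE_elem.
    rewrite inE => /eqP y0 ->; exists y => //.
    by rewrite VsetE_elem zero_at_id.
  by rewrite card_imset //; exact: latvec_inj.
split; last first.
  rewrite Ueq; case: eqP => // _.
  by rewrite cardsT card_ffun !card_ord.
pose W := \matrix_(a < #|U|, r < m ^ k) chi rho xpredT (enum_val a) r.
have rowW a : row a W = (latvec m k rho (enum_val a))^T.
  by apply/rowP => r; rewrite latvecE !mxE.
have WE : ((\sum_(l < m) <<(mxpow X l *m V)^T>>)%MS == W)%MS.
  apply/andP; split.
    apply/sumsmx_subP => l _; rewrite genmxE; apply/row_subP => c.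
    rewrite -tr_col; have [y y0 Ey] := colV c.
    have xU : sh hrho j l y \in U.
      rewrite UP; apply/existsP; exists l; rewrite LatP.
      by apply/existsP; exists y; rewrite y0 !eqxx.
    apply: (eq_row_sub (enum_rank_in xU (sh hrho j l y))).
    by rewrite rowW enum_rankK_in // col_mul Ey shiftE.
  apply/row_subP => a; have := enum_valP a; rewrite UP => /existsP [l].
  rewrite inE => /existsP [c /eqP Hc].
  rewrite (sumsmx_sup l) // genmxE.
  by apply: (eq_row_sub c); rewrite -tr_col Hc rowW.
rewrite -mxrank_tr tr_mxrow (eqmx_col _) (eqmx_rank WE).
by apply/eqP; exact: W_free.
Qed.
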